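(* Let $s>0$ and let $P:[0,\infty)\to\mathbb{R}$ be a $\mathcal{C}^2$ function with $P(x)>0$ for all $x>0$. Consider, for $x_0>0$ and $\gamma_0>0$, the initial value problem \[ \frac{d\gamma_1}{dx}=\frac{\gamma_1(x)+\gamma_1(x)^2-P(x)}{s\,x\,\gamma_1(x)},\qquad \gamma_1(x_0)=\gamma_0 . \] Then there exist positive global solutions of this initial value problem (i.e. there exist $x_0>0$ and $\gamma_0>0$ such that the solution exists and remains strictly positive for all $x\ge x_0$) if and only if \[ \int_{x_0}^{\infty}\frac{P(z)}{z^{1+2/s}}\,dz<\infty \] for some $x_0>0$.
   Context: Solutions are understood in the region $x>0$, $\gamma_1>0$, where the right-hand side is regular; for given initial data the solution is the unique maximal solution taking values in $(0,\infty)$. A solution is called global (for $x\to\infty$) if it can be continued, remaining strictly positive, to all $x\ge x_0$. *)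

(* Defs.v *)
From Stdlib Require Import Reals.
From Coquelicot Require Export Coquelicot.
Export Reals.
Open Scope R_scope.

Definition C2_on_nonneg (P : R -> R) : Prop :=
  forall x, 0 <= x ->
    ex_derive P x /\
    (exists eps : posreal, forall y, Rabs (y - x) < eps -> ex_derive P y /\
                                      ex_derive (Derive P) y) /\
    continuous (Derive_n P 2) x.

Definition ode_rhs (s : R) (P : R -> R) (x g : R) : R :=
  (g + g ^ 2 - P x) / (s * x * g).

Definition global_pos_solution (s : R) (P : R -> R) (x0 g0 : R) (gamma : R -> R) : Prop :=
  gamma x0 = g0 /\
  forall x, x0 <= x -> 0 < gamma x /\ is_derive gamma x (ode_rhs s P x (gamma x)).

(* Main.v *)
Require Import Defs.
From Stdlib Require Import Reals Lra Lia.
From Coquelicot Require Import Coquelicot.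
Open Scope R_scope.

Lemma der_mul (f g : R -> R) x df dg : is_derive f x df -> is_derive g x dg ->
  is_derive (fun y => f y * g y) x (df * g x + f x * dg).
Proof. intros H1 H2. apply (is_derive_mult f g x df dg); auto. intros; apply Rmult_comm. Qed.
Lemma der_plus (f g : R -> R) x df dg : is_derive f x df -> is_derive g x dg ->
  is_derive (fun y => f y + g y) x (df + dg).
Proof. intros H1 H2. apply (is_derive_plus f g x df dg); auto. Qed.
Lemma der_minus (f g : R -> R) x df dg : is_derive f x df -> is_derive g x dg ->
  is_derive (fun y => f y - g y) x (df - dg).
Proof. intros H1 H2. apply (is_derive_minus f g x df dg); auto. Qed.
Lemma der_const (c x : R) : is_derive (fun _ => c) x 0.
Proof. apply (is_derive_const (K:=R_AbsRing) (V:=R_NormedModule)). Qed.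
Lemma cont_mul (f g : R -> R) x : continuous f x -> continuous g x -> continuous (fun y => f y * g y) x.
Proof. intros; apply (continuous_mult f g); auto. Qed.
Lemma cont_plus (f g : R -> R) x : continuous f x -> continuous g x -> continuous (fun y => f y + g y) x.
Proof. intros; apply (continuous_plus f g); auto. Qed.
Lemma cont_minus (f g : R -> R) x : continuous f x -> continuous g x -> continuous (fun y => f y - g y) x.
Proof. intros; apply (continuous_minus f g); auto. Qed.
Lemma ball_R (x e y : R) : ball x e y <-> Rabs (y - x) < e.
Proof. unfold ball; simpl; unfold AbsRing_ball, abs, minus, plus, opp; simpl. tauto. Qed.
Lemma loc_pos x : 0 < x -> locally x (fun y => 0 < y).
Proof. intros H. exact (open_gt 0 x H). Qed.


Definition EE (s z : R) := Rpower z (/ s).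
Lemma EE_pos s z : 0 < EE s z.
Proof. unfold EE, Rpower. apply exp_pos. Qed.
Lemma EE_der s z : 0 < z -> is_derive (EE s) z (/ s * EE s z / z).
Proof.
  intros Hz. apply is_derive_Reals.
  assert (H := derivable_pt_lim_power z (/ s) Hz). unfold EE.
  replace (/ s * Rpower z (/ s) / z) with (/ s * Rpower z (/ s - 1)); auto.
  replace (/ s - 1) with (/ s + - (1)) by ring.
  rewrite Rpower_plus, Rpower_Ropp, Rpower_1 by auto. unfold Rdiv. ring.
Qed.
Lemma EE_cont s z : 0 < z -> continuous (EE s) z.
Proof. intros Hz. apply (ex_derive_continuous (K:=R_AbsRing) (V:=R_NormedModule)). eexists. apply EE_der; auto. Qed.
Lemma pow12 s z : 0 < s -> 0 < z -> Rpower z (1 + 2 / s) = z * EE s z * EE s z.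
Proof.
  intros Hs Hz. unfold EE. replace (2 / s) with (/ s + / s) by (field; lra).
  rewrite !Rpower_plus, Rpower_1 by auto. ring.
Qed.

Definition ff (s : R) (P : R -> R) z := P z / Rpower z (1 + 2 / s).
Lemma ff_eq s P z : 0 < s -> 0 < z -> ff s P z = P z / (z * EE s z * EE s z).
Proof. intros; unfold ff; rewrite pow12; auto. Qed.

Lemma ff_cont s P z : 0 < s -> C2_on_nonneg P -> 0 < z -> continuous (ff s P) z.
Proof.
  intros Hs HP Hz.
  assert (HPz : ex_derive P z) by (apply (HP z); lra).
  apply (ex_derive_continuous (K:=R_AbsRing) (V:=R_NormedModule)).
  destruct HPz as [dp Hdp].
  eexists. apply is_derive_ext_loc with (f := fun y => P y / (y * EE s y * EE s y)).
  - apply filter_imp with (2 := loc_pos z Hz). intros y Hy. rewrite ff_eq; auto.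
  - apply is_derive_div. exact Hdp.
    apply der_mul. apply der_mul. apply (is_derive_id (K:=R_AbsRing)). apply EE_der; auto.
    apply EE_der; auto.
    assert (0 < EE s z) by apply EE_pos. apply Rgt_not_eq.
    apply Rmult_lt_0_compat; [apply Rmult_lt_0_compat|]; auto.
Qed.
Lemma ff_pos s P z : 0 < s -> (forall x, 0 < x -> 0 < P x) -> 0 < z -> 0 <= ff s P z.
Proof.
  intros Hs HP Hz. rewrite ff_eq; auto. assert (0 < EE s z) by apply EE_pos.
  apply Rlt_le. apply Rdiv_lt_0_compat; auto.
  apply Rmult_lt_0_compat; [apply Rmult_lt_0_compat|]; auto.
Qed.

Lemma decr (G dG : R -> R) x0 : (forall y, x0 <= y -> is_derive G y (dG y)) ->
  (forall y, x0 <= y -> dG y <= 0) -> forall x, x0 <= x -> G x <= G x0.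
Proof.
  intros HD Hn x Hx. destruct (Req_dec x x0) as [->|Hne]. lra.
  destruct (MVT_cor3 G dG x0 x) as [c [H1 [H2 H3]]]. lra.
  intros y Hy1 Hy2. apply is_derive_Reals. apply HD; lra.
  rewrite H3. assert (dG c <= 0) by (apply Hn; lra).
  assert (dG c * (x - x0) <= 0). apply Rmult_le_0_r; lra. lra.
Qed.

Lemma gen_lim (g : R -> R) x0 : ex_RInt_gen g (at_point x0) (Rbar_locally p_infty) ->
  exists l, forall eps, 0 < eps -> exists M, forall b, M < b -> Rabs (RInt g x0 b - l) < eps.
Proof.
  intros [l Hl]. exists l. intros eps He.
  specialize (Hl (ball l (mkposreal eps He)) (locally_ball l (mkposreal eps He))).
  destruct Hl as [Q R HQ HR H]. destruct HR as [M HM]. exists M. intros b Hb.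
  destruct (H x0 b HQ (HM b Hb)) as [y [Hy Hb']]. simpl in Hy.
  rewrite (is_RInt_unique _ _ _ _ Hy). apply ball_R in Hb'. exact Hb'.
Qed.

Lemma RInt_mono (g : R -> R) a b c : a <= b <= c -> (forall z, a <= z -> continuous g z) ->
  (forall z, a <= z -> 0 <= g z) -> RInt g a b <= RInt g a c.
Proof.
  intros Hb Hc Hp.
  assert (Hex : forall u v, a <= u -> a <= v -> ex_RInt g u v).
  { intros u v Hu Hv. apply (ex_RInt_continuous (V:=R_CompleteNormedModule)). intros z Hz. apply Hc.
    assert (a <= Rmin u v) by (apply Rmin_glb; auto). lra. }
  rewrite <- (RInt_Chasles g a b c) by (apply Hex; lra).
  assert (0 <= RInt g b c). apply RInt_ge_0; try lra. apply Hex; lra.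
  intros; apply Hp; lra.
  change (plus (RInt g a b) (RInt g b c)) with (RInt g a b + RInt g b c). lra.
Qed.

Lemma gen_of_bounded (g : R -> R) x0 K : (forall z, x0 <= z -> continuous g z) ->
  (forall z, x0 <= z -> 0 <= g z) -> (forall x, x0 <= x -> RInt g x0 x <= K) ->
  ex_RInt_gen g (at_point x0) (Rbar_locally p_infty).
Proof.
  intros Hc Hp HK.
  set (S := fun y => exists x, x0 <= x /\ y = RInt g x0 x).
  destruct (completeness S) as [l [Hub Hlub]].
  { exists K. intros y [x [Hx ->]]. apply HK; auto. }
  { exists (RInt g x0 x0). exists x0. split; auto; lra. }
  exists l. intros Q [eps Heps].
  assert (Hx1 : exists x1, x0 <= x1 /\ l - eps < RInt g x0 x1).
  { apply Classical_Pred_Type.not_all_not_ex. intros Hn.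
    assert (l <= l - eps). apply Hlub. intros y [x [Hx ->]].
    specialize (Hn x). apply Rnot_lt_le. intros Hlt. apply Hn. auto.
    destruct eps; simpl in *; lra. }
  destruct Hx1 as [x1 [Hx1 Hlt]].
  apply (Filter_prod _ _ _ (fun a => a = x0) (fun b => x1 < b)).
  - reflexivity.
  - exists x1. auto.
  - intros a b -> Hb. exists (RInt g x0 b). split.
    + apply (RInt_correct (V:=R_CompleteNormedModule)). apply (ex_RInt_continuous (V:=R_CompleteNormedModule)). intros z Hz. apply Hc.
      rewrite Rmin_left in Hz by lra. lra.
    + apply Heps. apply ball_R.
      assert (RInt g x0 x1 <= RInt g x0 b) by (apply RInt_mono; auto; lra).
      assert (RInt g x0 b <= l) by (apply Hub; exists b; split; auto; lra).
      apply Rabs_def1; destruct eps; simpl in *; lra.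
Qed.


Lemma RInt_der (g : R -> R) a z : 0 < a -> 0 < z -> (forall y, 0 < y -> continuous g y) ->
  is_derive (fun b => RInt g a b) z (g z).
Proof.
  intros Ha Hz Hc. apply (is_derive_RInt g (fun b => RInt g a b) a z).
  - apply filter_imp with (2 := loc_pos z Hz). intros b Hb.
    apply (RInt_correct (V:=R_CompleteNormedModule)).
    apply (ex_RInt_continuous (V:=R_CompleteNormedModule)).
    intros y Hy. apply Hc. assert (0 < Rmin a b) by (apply Rmin_glb_lt; auto). lra.
  - apply Hc; auto.
Qed.

Lemma dir1 s P : 0 < s -> C2_on_nonneg P -> (forall x, 0 < x -> 0 < P x) ->
  forall x0 g0 gamma, 0 < x0 -> global_pos_solution s P x0 g0 gamma ->
  ex_RInt_gen (ff s P) (at_point x0) (Rbar_locally p_infty).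
Proof.
  intros Hs HC HP x0 g0 gamma Hx0 [_ Hg].
  set (E := EE s). set (dE := fun z => / s * E z / z).
  set (v := fun z => gamma z / E z).
  set (dv := fun z => - (P z / (s * z * gamma z * E z)) + dE z / (E z) ^ 2).
  assert (HE : forall z, 0 < E z) by (intros; apply EE_pos).
  assert (Hv : forall z, x0 <= z -> is_derive v z (dv z)).
  { intros z Hz. destruct (Hg z Hz) as [Hpos Hd].
    assert (Ez := HE z).
    replace (dv z) with ((ode_rhs s P z (gamma z) * E z - gamma z * dE z) / E z ^ 2).
    apply is_derive_div; auto. apply EE_der; lra. lra.
    unfold dv, dE, ode_rhs. field. repeat split; lra. }
  set (H := fun z => v z + / E z).
  assert (HH : forall z, x0 <= z -> is_derive H z (dv z + (- dE z / E z ^ 2))).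
  { intros z Hz. apply der_plus. apply Hv; auto. apply is_derive_inv.
    apply EE_der; lra. assert (Ez := HE z). lra. }
  assert (Hdec : forall x, x0 <= x -> H x <= H x0).
  { apply (decr H (fun z => dv z + (- dE z / E z ^ 2))). exact HH.
    intros z Hz. destruct (Hg z Hz) as [Hpos _]. assert (Ez := HE z).
    assert (Pz := HP z ltac:(lra)).
    replace (dv z + - dE z / E z ^ 2) with (- (P z / (s * z * gamma z * E z))).
    assert (0 < P z / (s * z * gamma z * E z)).
    apply Rdiv_lt_0_compat; auto. repeat apply Rmult_lt_0_compat; lra. lra.
    unfold dv. field. lra. }
  set (M := H x0).
  assert (HvM : forall x, x0 <= x -> v x <= M).
  { intros x Hx. assert (Hd := Hdec x Hx). unfold H in Hd. assert (Ex := HE x).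
    assert (0 < / E x) by (apply Rinv_0_lt_compat; auto). unfold M, H. lra. }
  set (G := fun z => RInt (ff s P) x0 z * / s + v z * v z * / 2 + M * / E z).
  set (dG := fun z => ff s P z * / s + (dv z * v z + v z * dv z) * / 2 + M * (- dE z / E z ^ 2)).
  assert (HG : forall z, x0 <= z -> is_derive G z (dG z)).
  { intros z Hz. unfold G, dG.
    apply (der_plus (fun z => RInt (ff s P) x0 z * / s + v z * v z * / 2) (fun z => M * / E z)).
    apply (der_plus (fun z => RInt (ff s P) x0 z * / s) (fun z => v z * v z * / 2)).
    - replace (ff s P z * / s) with (ff s P z * / s + RInt (ff s P) x0 z * 0) by ring.
      apply (der_mul (fun z => RInt (ff s P) x0 z) (fun _ => / s)). apply RInt_der; auto. lra. intros; apply ff_cont; auto. apply der_const.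
    - replace ((dv z * v z + v z * dv z) * / 2) with ((dv z * v z + v z * dv z) * / 2 + v z * v z * 0) by ring.
      apply (der_mul (fun z => v z * v z) (fun _ => / 2)). apply der_mul; apply Hv; auto. apply der_const.
    - replace (M * (- dE z / E z ^ 2)) with (0 * / E z + M * (- dE z / E z ^ 2)) by ring.
      apply (der_mul (fun _ => M) (fun z => / E z)). apply der_const. apply is_derive_inv. apply EE_der; lra.
      assert (Ez := HE z). lra. }
  assert (HGd : forall x, x0 <= x -> G x <= G x0).
  { apply (decr G dG). exact HG. intros z Hz.
    destruct (Hg z Hz) as [Hpos _]. assert (Ez := HE z).
    replace (dG z) with ((v z - M) * (dE z / E z ^ 2)).
    assert (0 < dE z / E z ^ 2). unfold dE.
    apply Rdiv_lt_0_compat. apply Rdiv_lt_0_compat. apply Rmult_lt_0_compat; auto.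
    apply Rinv_0_lt_compat; auto. lra. apply pow_lt; auto.
    assert (v z - M <= 0) by (assert (Hm := HvM z Hz); lra).
    apply Rmult_le_0_r; lra.
    unfold dG, dv, v. rewrite ff_eq by lra. fold E. field. repeat split; lra. }
  apply (gen_of_bounded _ x0 (s * G x0)).
  - intros z Hz. apply ff_cont; auto; lra.
  - intros z Hz. apply ff_pos; auto; lra.
  - intros x Hx. assert (Hd := HGd x Hx). assert (Hgx : G x = RInt (ff s P) x0 x * / s + v x * v x * / 2 + M * / E x) by reflexivity.
    assert (0 <= v x * v x * / 2).
    { assert (0 <= v x * v x) by apply Rle_0_sqr. lra. }
    assert (0 <= M * / E x).
    { apply Rmult_le_pos. unfold M, H, v.
      destruct (Hg x0 (Rle_refl _)) as [Hp _]. assert (E0 := HE x0).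
      assert (0 < gamma x0 / E x0) by (apply Rdiv_lt_0_compat; auto).
      assert (0 < / E x0) by (apply Rinv_0_lt_compat; auto). lra.
      apply Rlt_le, Rinv_0_lt_compat; auto. }
    assert (Hr : RInt (ff s P) x0 x * / s <= G x0) by lra.
    replace (RInt (ff s P) x0 x) with (s * (RInt (ff s P) x0 x * / s)) by (field; lra).
    apply Rmult_le_compat_l; lra.
Qed.


Definition kk (c t : R) := Rmax c t.
Lemma kk_ge c t : c <= kk c t.
Proof. apply Rmax_l. Qed.
Lemma kk_id c t : c <= t -> kk c t = t.
Proof. intros; unfold kk; rewrite Rmax_right; auto. Qed.
Lemma kk_lip c t u : Rabs (kk c t - kk c u) <= Rabs (t - u).
Proof.
  unfold kk, Rmax. destruct (Rle_dec c t); destruct (Rle_dec c u);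
  unfold Rabs; repeat destruct Rcase_abs; lra.
Qed.
Lemma kk_cont c t : continuous (kk c) t.
Proof.
  apply continuity_pt_filterlim.
  unfold continuity_pt, continue_in, limit1_in, limit_in. intros eps He.
  exists eps. split; auto. intros x [_ Hx]. simpl in *. unfold R_dist in *.
  eapply Rle_lt_trans. apply kk_lip. auto.
Qed.

Lemma exR (g : R -> R) a b : (forall t, continuous g t) -> ex_RInt g a b.
Proof. intros H. apply (ex_RInt_continuous (V:=R_CompleteNormedModule)). intros; apply H. Qed.
Lemma IntCont (g : R -> R) a : (forall t, continuous g t) -> forall x, continuous (fun b => RInt g a b) x.
Proof.
  intros H x. apply (continuous_RInt_1 g a x (fun b => RInt g a b)).
  apply filter_forall. intros y. apply (RInt_correct (V:=R_CompleteNormedModule)). apply exR; auto.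
Qed.
Lemma IntDer (g : R -> R) a : (forall t, continuous g t) -> forall x, is_derive (fun b => RInt g a b) x (g x).
Proof.
  intros H x. apply (is_derive_RInt g (fun b => RInt g a b) a x).
  apply filter_forall. intros y. apply (RInt_correct (V:=R_CompleteNormedModule)). apply exR; auto.
  auto.
Qed.

Definition Hyp s P c := 0 < s /\ C2_on_nonneg P /\ (forall x, 0 < x -> 0 < P x) /\ 0 < c /\
  (forall x, c <= x -> RInt (ff s P) c x <= s / 2).

Definition fb s P c t := ff s P (kk c t) / s.
Definition fa s c t := / (s * kk c t * EE s (kk c t)).
Definition hh s P c (w : R -> R) t := fb s P c t / w (kk c t).
Definition TT s P c (w : R -> R) x := 2 + RInt (fa s c) c x - RInt (hh s P c w) c x.
Fixpoint vv s P c n : R -> R := match n with O => fun _ => 2 | S n => TT s P c (vv s P c n) end.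
Definition Good c (w : R -> R) := (forall t, continuous (fun t => w (kk c t)) t) /\ (forall t, c <= t -> 1 <= w t).

Section S.
Lemma fb_cont s P c t : Hyp s P c -> continuous (fb s P c) t.
Proof.
  intros (Hs & HC & HP & Hc & _). unfold fb.
  apply (cont_mul (fun t => ff s P (kk c t)) (fun _ => / s)).
  apply (continuous_comp (kk c) (ff s P)). apply kk_cont.
  apply ff_cont; auto. assert (H := kk_ge c t); lra.
  apply continuous_const.
Qed.
Lemma fb_pos s P c t : Hyp s P c -> 0 <= fb s P c t.
Proof.
  intros (Hs & HC & HP & Hc & _). unfold fb. apply Rmult_le_pos.
  apply ff_pos; auto. assert (H := kk_ge c t); lra. apply Rlt_le, Rinv_0_lt_compat; auto.
Qed.
Lemma fa_cont s P c t : Hyp s P c -> continuous (fa s c) t.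
Proof.
  intros (Hs & HC & HP & Hc & _). unfold fa. assert (H := kk_ge c t).
  apply continuous_Rinv_comp.
  apply (cont_mul (fun t => s * kk c t) (fun t => EE s (kk c t))).
  apply (cont_mul (fun _ => s) (kk c)). apply continuous_const. apply kk_cont.
  apply (continuous_comp (kk c) (EE s)). apply kk_cont. apply EE_cont; lra.
  assert (0 < EE s (kk c t)) by apply EE_pos.
  apply Rgt_not_eq. repeat apply Rmult_lt_0_compat; lra.
Qed.
Lemma fa_pos s P c t : Hyp s P c -> 0 <= fa s c t.
Proof.
  intros (Hs & HC & HP & Hc & _). unfold fa. assert (H := kk_ge c t).
  assert (0 < EE s (kk c t)) by apply EE_pos.
  apply Rlt_le, Rinv_0_lt_compat. repeat apply Rmult_lt_0_compat; lra.
Qed.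
Lemma hh_cont s P c w t : Hyp s P c -> Good c w -> continuous (hh s P c w) t.
Proof.
  intros HH [Hw1 Hw2]. unfold hh.
  apply (cont_mul (fb s P c) (fun t => / w (kk c t))). apply fb_cont; auto.
  apply continuous_Rinv_comp. apply Hw1.
  assert (1 <= w (kk c t)) by (apply Hw2; apply kk_ge). lra.
Qed.
Lemma hh_bounds s P c w t : Hyp s P c -> Good c w -> c <= t -> 0 <= hh s P c w t <= fb s P c t.
Proof.
  intros HH [Hw1 Hw2] Ht. unfold hh. assert (F := fb_pos s P c t HH).
  assert (1 <= w (kk c t)) by (apply Hw2; apply kk_ge). split.
  apply Rmult_le_pos; auto. apply Rlt_le, Rinv_0_lt_compat; lra.
  unfold Rdiv. rewrite <- (Rmult_1_r (fb s P c t)) at 2. apply Rmult_le_compat_l; auto.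
  rewrite <- Rinv_1. apply Rinv_le_contravar; lra.
Qed.
Lemma fb_int s P c x : Hyp s P c -> c <= x -> 0 <= RInt (fb s P c) c x <= 1 / 2.
Proof.
  intros HH Hx. pose proof HH as (Hs & HC & HP & Hc & HB). split.
  apply RInt_ge_0; auto. apply exR; intros; apply fb_cont; auto.
  intros; apply fb_pos; auto.
  assert (Ex : ex_RInt (ff s P) c x).
  { apply (ex_RInt_continuous (V:=R_CompleteNormedModule)). intros z Hz. apply ff_cont; auto.
    rewrite Rmin_left in Hz by lra. lra. }
  assert (Heq : RInt (fb s P c) c x = / s * RInt (ff s P) c x).
  { transitivity (scal (/ s) (RInt (ff s P) c x)); [|reflexivity].
    rewrite <- (RInt_scal (V:=R_CompleteNormedModule) (ff s P) c x (/ s) Ex).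
    apply (RInt_ext (V:=R_CompleteNormedModule)).
    intros t Ht. rewrite Rmin_left in Ht by lra. rewrite Rmax_right in Ht by lra.
    unfold fb. rewrite kk_id by lra. change (scal (/ s) (ff s P t)) with (/ s * ff s P t).
    unfold Rdiv; apply Rmult_comm. }
  rewrite Heq. assert (H := HB x Hx).
  replace (1 / 2) with (/ s * (s / 2)) by (field; lra).
  apply Rmult_le_compat_l; auto. apply Rlt_le, Rinv_0_lt_compat; auto.
Qed.
Lemma hh_int s P c w x : Hyp s P c -> Good c w -> c <= x -> 0 <= RInt (hh s P c w) c x <= 1 / 2.
Proof.
  intros HH HG Hx. assert (Hf := fb_int s P c x HH Hx). split.
  apply RInt_ge_0; auto. apply exR; intros; apply hh_cont; auto.
  intros t Ht; destruct (hh_bounds s P c w t HH HG ltac:(lra)); auto.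
  eapply Rle_trans; [|apply Hf]. apply RInt_le; auto.
  apply exR; intros; apply hh_cont; auto. apply exR; intros; apply fb_cont; auto.
  intros t Ht; destruct (hh_bounds s P c w t HH HG ltac:(lra)); auto.
Qed.
Lemma fa_int s P c x : Hyp s P c -> c <= x -> 0 <= RInt (fa s c) c x.
Proof.
  intros HH Hx. apply RInt_ge_0; auto. apply exR; intros; apply (fa_cont s P); auto.
  intros; apply (fa_pos s P); auto.
Qed.

Lemma T_good s P c w : Hyp s P c -> Good c w -> Good c (TT s P c w).
Proof.
  intros HH HG. split.
  - intros t. unfold TT.
    apply (cont_minus (fun t => 2 + RInt (fa s c) c (kk c t)) (fun t => RInt (hh s P c w) c (kk c t))).
    apply (cont_plus (fun _ => 2) (fun t => RInt (fa s c) c (kk c t))). apply continuous_const.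
    apply (continuous_comp (kk c) (fun b => RInt (fa s c) c b)). apply kk_cont.
    apply IntCont. intros; apply (fa_cont s P); auto.
    apply (continuous_comp (kk c) (fun b => RInt (hh s P c w) c b)). apply kk_cont.
    apply IntCont. intros; apply hh_cont; auto.
  - intros t Ht. unfold TT. assert (H1 := fa_int s P c t HH Ht).
    assert (H2 := hh_int s P c w t HH HG Ht). lra.
Qed.

Lemma lip_inv a b : 1 <= a -> 1 <= b -> Rabs (/ b - / a) <= Rabs (a - b).
Proof.
  intros Ha Hb. replace (/ b - / a) with ((a - b) / (a * b)) by (field; lra).
  rewrite Rabs_div by nra. rewrite (Rabs_right (a * b)) by nra.
  unfold Rdiv. rewrite <- (Rmult_1_r (Rabs (a - b))) at 2.
  apply Rmult_le_compat_l. apply Rabs_pos. rewrite <- Rinv_1. apply Rinv_le_contravar; nra.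
Qed.

Lemma contr s P c w1 w2 x D : Hyp s P c -> Good c w1 -> Good c w2 -> c <= x ->
  (forall t, c <= t <= x -> Rabs (w1 t - w2 t) <= D) ->
  Rabs (TT s P c w1 x - TT s P c w2 x) <= D / 2.
Proof.
  intros HH G1 G2 Hx HD.
  assert (HD0 : 0 <= D) by (eapply Rle_trans; [apply Rabs_pos|apply (HD x)]; lra).
  assert (E1 := exR (hh s P c w1) c x (fun t => hh_cont s P c w1 t HH G1)).
  assert (E2 := exR (hh s P c w2) c x (fun t => hh_cont s P c w2 t HH G2)).
  assert (Ef := exR (fb s P c) c x (fun t => fb_cont s P c t HH)).
  replace (TT s P c w1 x - TT s P c w2 x) with (RInt (fun t => hh s P c w2 t - hh s P c w1 t) c x).
  2:{ unfold TT. rewrite (RInt_minus (V:=R_CompleteNormedModule) (hh s P c w2) (hh s P c w1)) by auto.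
      change (minus (RInt (hh s P c w2) c x) (RInt (hh s P c w1) c x)) with
        (RInt (hh s P c w2) c x - RInt (hh s P c w1) c x). match goal with |- ?a = ?b => change (@eq R a b) end; ring. }
  assert (Hpt : forall t, c < t < x -> Rabs (hh s P c w2 t - hh s P c w1 t) <= D * fb s P c t).
  { intros t Ht. unfold hh. rewrite kk_id by lra.
    destruct G1 as [_ G1]. destruct G2 as [_ G2].
    assert (g1 := G1 t ltac:(lra)). assert (g2 := G2 t ltac:(lra)).
    unfold Rdiv. replace (fb s P c t * / w2 t - fb s P c t * / w1 t) with
      (fb s P c t * (/ w2 t - / w1 t)) by ring.
    rewrite Rabs_mult, (Rabs_right (fb s P c t)) by (apply Rle_ge, fb_pos; auto).
    rewrite Rmult_comm. apply Rmult_le_compat_r. apply fb_pos; auto.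
    eapply Rle_trans. apply lip_inv; auto. apply HD; lra. }
  assert (Hi : RInt (fun t => D * fb s P c t) c x = D * RInt (fb s P c) c x).
  { apply (RInt_scal (V:=R_CompleteNormedModule) (fb s P c) c x D Ef). }
  assert (Hf := fb_int s P c x HH Hx).
  assert (Ed : ex_RInt (fun t => hh s P c w2 t - hh s P c w1 t) c x).
  { apply (ex_RInt_minus (V:=R_CompleteNormedModule) (hh s P c w2) (hh s P c w1)); auto. }
  assert (EDf : ex_RInt (fun t => D * fb s P c t) c x).
  { apply (ex_RInt_scal (V:=R_CompleteNormedModule) (fb s P c) c x D); auto. }
  assert (EDf' : ex_RInt (fun t => - (D * fb s P c t)) c x).
  { apply (ex_RInt_opp (V:=R_CompleteNormedModule) (fun t => D * fb s P c t)); auto. }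
  assert (Hup : RInt (fun t => hh s P c w2 t - hh s P c w1 t) c x <= RInt (fun t => D * fb s P c t) c x).
  { apply RInt_le; auto. intros t Ht. specialize (Hpt t Ht). apply Rabs_le_between in Hpt. lra. }
  assert (Hlo : RInt (fun t => - (D * fb s P c t)) c x <= RInt (fun t => hh s P c w2 t - hh s P c w1 t) c x).
  { apply RInt_le; auto. intros t Ht. specialize (Hpt t Ht). apply Rabs_le_between in Hpt. lra. }
  rewrite (RInt_opp (V:=R_CompleteNormedModule) (fun t => D * fb s P c t)) in Hlo by auto.
  change (opp (RInt (fun t => D * fb s P c t) c x)) with (- RInt (fun t => D * fb s P c t) c x) in Hlo.
  rewrite Hi in Hup, Hlo. apply Rabs_le. split; nra.
Qed.
End S.


Lemma vv_good s P c n : Hyp s P c -> Good c (vv s P c n).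
Proof.
  intros HH. induction n.
  - split. intros; apply continuous_const. intros; simpl; lra.
  - simpl. apply T_good; auto.
Qed.

Definition KK s c x := RInt (fa s c) c x + 1.

Lemma fa_mono s P c t x : Hyp s P c -> c <= t <= x -> RInt (fa s c) c t <= RInt (fa s c) c x.
Proof.
  intros HH Ht. apply RInt_mono; auto. intros; apply (fa_cont s P); auto.
  intros; apply (fa_pos s P); auto.
Qed.

Lemma KK_ge s P c x : Hyp s P c -> c <= x -> 1 <= KK s c x.
Proof. intros HH Hx. unfold KK. assert (H := fa_int s P c x HH Hx). lra. Qed.

Lemma step s P c n : Hyp s P c -> forall x t, c <= t <= x ->
  Rabs (vv s P c (S n) t - vv s P c n t) <= KK s c x * (1/2) ^ n.
Proof.
  intros HH. induction n; intros x t Ht.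
  - change (vv s P c 1 t) with (TT s P c (fun _ => 2) t). change (vv s P c 0 t) with 2.
    unfold TT, KK. simpl pow.
    assert (H1 := fa_int s P c t HH ltac:(lra)).
    assert (H2 := fa_mono s P c t x HH Ht).
    assert (H3 := hh_int s P c (fun _ => 2) t HH (vv_good s P c 0 HH) ltac:(lra)).
    apply Rabs_le; split; lra.
  - change (vv s P c (S (S n)) t) with (TT s P c (vv s P c (S n)) t).
    change (vv s P c (S n) t) with (TT s P c (vv s P c n) t).
    eapply Rle_trans. apply (contr s P c _ _ t (KK s c x * (1/2)^n)); auto.
    apply vv_good; auto. apply vv_good; auto. lra.
    intros t' Ht'. apply (IHn x t'). lra.
    simpl pow. lra.
Qed.

Lemma cauchy s P c j : Hyp s P c -> forall n x t, c <= t <= x ->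
  Rabs (vv s P c (n + j) t - vv s P c n t) <= 2 * KK s c x * ((1/2) ^ n - (1/2) ^ (n + j)).
Proof.
  intros HH. induction j; intros n x t Ht.
  - rewrite Nat.add_0_r. unfold Rminus. rewrite !Rplus_opp_r, Rabs_R0. lra.
  - rewrite Nat.add_succ_r.
    replace (vv s P c (S (n + j)) t - vv s P c n t) with
      ((vv s P c (S (n + j)) t - vv s P c (n + j) t) + (vv s P c (n + j) t - vv s P c n t)) by ring.
    eapply Rle_trans. apply Rabs_triang.
    assert (H1 := step s P c (n + j) HH x t Ht). assert (H2 := IHj n x t Ht).
    simpl pow. lra.
Qed.

Lemma cauchy2 s P c j n x t : Hyp s P c -> c <= t <= x ->
  Rabs (vv s P c (n + j) t - vv s P c n t) <= 2 * KK s c x * (1/2) ^ n.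
Proof.
  intros HH Ht. eapply Rle_trans. apply (cauchy s P c j HH n x t Ht).
  assert (0 <= (1/2) ^ (n + j)) by (apply pow_le; lra).
  assert (1 <= KK s c x) by (apply (KK_ge s P); auto; lra). assert (0 <= KK s c x * (1/2) ^ (n + j)) by (apply Rmult_le_pos; lra). lra.
Qed.

Lemma half_small y : 0 < y -> exists N : nat, (1/2) ^ N < y.
Proof.
  intros Hy. destruct (pow_lt_1_zero (1/2) ltac:(rewrite Rabs_right; lra) y Hy) as [N HN].
  exists N. specialize (HN N (le_n N)). rewrite Rabs_right in HN; auto.
  apply Rle_ge, pow_le; lra.
Qed.

Lemma conv s P c t : Hyp s P c -> c <= t -> ex_finite_lim_seq (fun n => vv s P c n t).
Proof.
  intros HH Ht. apply ex_lim_seq_cauchy_corr. intros eps.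
  assert (HK := KK_ge s P c t HH Ht).
  destruct (half_small (eps / (4 * KK s c t))) as [N HN].
  { apply Rdiv_lt_0_compat. apply cond_pos. lra. }
  exists N. intros n m Hn Hm.
  assert (A1 := cauchy2 s P c (n - N) N t t HH ltac:(lra)).
  assert (A2 := cauchy2 s P c (m - N) N t t HH ltac:(lra)).
  replace (N + (n - N))%nat with n in A1 by lia.
  replace (N + (m - N))%nat with m in A2 by lia.
  assert (HN' : 4 * KK s c t * (1/2) ^ N < eps).
  { apply Rmult_lt_compat_l with (r := 4 * KK s c t) in HN; [|lra].
    replace (4 * KK s c t * (eps / (4 * KK s c t))) with (pos eps) in HN by (field; lra). lra. }
  apply Rabs_le_between in A1. apply Rabs_le_between in A2. apply Rabs_def1; lra.
Qed.

Definition vl s P c t := real (Lim_seq (fun n => vv s P c n t)).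

Lemma vl_lim s P c t : Hyp s P c -> c <= t -> is_lim_seq (fun n => vv s P c n t) (vl s P c t).
Proof.
  intros HH Ht. destruct (conv s P c t HH Ht) as [l Hl]. unfold vl.
  rewrite (is_lim_seq_unique _ _ Hl). simpl. exact Hl.
Qed.

Lemma tail s P c n t x : Hyp s P c -> c <= t <= x ->
  Rabs (vl s P c t - vv s P c n t) <= 2 * KK s c x * (1/2) ^ n.
Proof.
  intros HH Ht. assert (Hl := vl_lim s P c t HH ltac:(lra)).
  apply (is_lim_seq_incr_n _ n) in Hl.
  assert (H3 := is_lim_seq_abs _ _ (is_lim_seq_minus' _ _ _ _ Hl (is_lim_seq_const (vv s P c n t)))).
  simpl in H3.
  assert (Hb : forall j, Rabs (vv s P c (j + n) t - vv s P c n t) <= 2 * KK s c x * (1/2) ^ n).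
  { intros j. rewrite Nat.add_comm. apply cauchy2; auto. }
  assert (H4 := is_lim_seq_le _ _ _ _ Hb H3 (is_lim_seq_const (2 * KK s c x * (1/2) ^ n))).
  simpl in H4. exact H4.
Qed.

Lemma vl_ge1 s P c t : Hyp s P c -> c <= t -> 1 <= vl s P c t.
Proof.
  intros HH Ht. assert (Hb : forall n, 1 <= vv s P c n t).
  { intros n. destruct (vv_good s P c n HH) as [_ G]. apply G; auto. }
  assert (H := is_lim_seq_le _ _ _ _ Hb (is_lim_seq_const 1) (vl_lim s P c t HH Ht)).
  simpl in H. exact H.
Qed.

Lemma vl_cont s P c t0 : Hyp s P c -> continuous (fun t => vl s P c (kk c t)) t0.
Proof.
  intros HH. apply continuity_pt_filterlim.
  unfold continuity_pt, continue_in, limit1_in, limit_in. intros eps He.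
  set (x := kk c t0 + 1).
  assert (Hc0 := kk_ge c t0).
  assert (HK := KK_ge s P c x HH ltac:(unfold x; lra)).
  destruct (half_small (eps / (6 * KK s c x))) as [N HN].
  { apply Rdiv_lt_0_compat; lra. }
  assert (HN' : 2 * KK s c x * (1/2) ^ N < eps / 3).
  { apply Rmult_lt_compat_l with (r := 6 * KK s c x) in HN; [|lra].
    replace (6 * KK s c x * (eps / (6 * KK s c x))) with eps in HN by (field; lra). lra. }
  destruct (vv_good s P c N HH) as [GC _].
  assert (Hc := proj2 (continuity_pt_filterlim _ t0) (GC t0)).
  destruct (Hc (eps / 3) ltac:(lra)) as [d [Hd Hdd]].
  exists (Rmin d 1). split. apply Rmin_glb_lt; lra.
  intros u [Hdx Hu]. simpl in *. unfold R_dist in *.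
  assert (Hu1 : Rabs (u - t0) < d) by (eapply Rlt_le_trans; [exact Hu|apply Rmin_l]).
  assert (Hu2 : Rabs (u - t0) < 1) by (eapply Rlt_le_trans; [exact Hu|apply Rmin_r]).
  assert (Hk := kk_lip c u t0). assert (Hcu := kk_ge c u).
  assert (Hkx : kk c u <= x).
  { apply Rabs_le_between in Hk. destruct (Rabs_def2 _ _ Hu2). unfold x. destruct Hk. lra. }
  assert (T1 := tail s P c N (kk c u) x HH ltac:(lra)).
  assert (T2 := tail s P c N (kk c t0) x HH ltac:(unfold x; lra)).
  assert (T3 := Hdd u (conj Hdx Hu1)). simpl in T3. unfold R_dist in T3.
  apply Rabs_le_between in T1. apply Rabs_le_between in T2. destruct (Rabs_def2 _ _ T3). destruct T1, T2.
  apply Rabs_def1; lra.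
Qed.

Lemma vl_good s P c : Hyp s P c -> Good c (vl s P c).
Proof.
  intros HH. split. intros; apply vl_cont; auto. intros; apply vl_ge1; auto.
Qed.

Lemma fixpt s P c x : Hyp s P c -> c <= x -> vl s P c x = TT s P c (vl s P c) x.
Proof.
  intros HH Hx.
  assert (HK := KK_ge s P c x HH Hx).
  assert (Hb : forall n, Rabs (vl s P c x - TT s P c (vl s P c) x) <= 2 * KK s c x * (1/2) ^ n).
  { intros n.
    assert (B1 := tail s P c (S n) x x HH ltac:(lra)).
    change (vv s P c (S n) x) with (TT s P c (vv s P c n) x) in B1.
    assert (B2 := contr s P c (vv s P c n) (vl s P c) x (2 * KK s c x * (1/2) ^ n) HH
                    (vv_good s P c n HH) (vl_good s P c HH) Hx).
    assert (B2' : Rabs (TT s P c (vv s P c n) x - TT s P c (vl s P c) x) <= 2 * KK s c x * (1 / 2) ^ n / 2).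
    { apply B2. intros t Ht. rewrite Rabs_minus_sym. apply tail; auto. }
    simpl pow in B1.
    apply Rabs_le_between in B1. apply Rabs_le_between in B2'. apply Rabs_le; split; lra. }
  destruct (Req_dec (vl s P c x) (TT s P c (vl s P c) x)) as [E|E]; auto.
  exfalso. assert (Hd : 0 < Rabs (vl s P c x - TT s P c (vl s P c) x)).
  { apply Rabs_pos_lt. lra. }
  destruct (half_small (Rabs (vl s P c x - TT s P c (vl s P c) x) / (2 * KK s c x))) as [N HN].
  { apply Rdiv_lt_0_compat; lra. }
  specialize (Hb N).
  apply Rmult_lt_compat_l with (r := 2 * KK s c x) in HN; [|lra].
  replace (2 * KK s c x * (Rabs (vl s P c x - TT s P c (vl s P c) x) / (2 * KK s c x))) with
    (Rabs (vl s P c x - TT s P c (vl s P c) x)) in HN by (field; lra). lra.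
Qed.

Lemma vl_der s P c x : Hyp s P c -> c < x ->
  is_derive (vl s P c) x (fa s c x - hh s P c (vl s P c) x).
Proof.
  intros HH Hx.
  apply is_derive_ext_loc with (f := TT s P c (vl s P c)).
  { apply filter_imp with (2 := open_gt c x Hx). intros t Ht. symmetry. apply fixpt; auto; lra. }
  unfold TT. replace (fa s c x - hh s P c (vl s P c) x) with (0 + fa s c x - hh s P c (vl s P c) x) by ring.
  apply (der_minus (fun y => 2 + RInt (fa s c) c y) (fun y => RInt (hh s P c (vl s P c)) c y)).
  apply (der_plus (fun _ => 2) (fun y => RInt (fa s c) c y)). apply der_const.
  apply IntDer. intros; apply (fa_cont s P); auto.
  apply IntDer. intros; apply hh_cont; auto. apply vl_good; auto.
Qed.

Lemma dir2 s P c : Hyp s P c ->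
  exists x0 g0 : R, 0 < x0 /\ 0 < g0 /\ exists gamma : R -> R, global_pos_solution s P x0 g0 gamma.
Proof.
  intros HH. pose proof HH as (Hs & HC & HP & Hc & _).
  assert (Hpos : forall x, c <= x -> 0 < vl s P c x * EE s x).
  { intros x Hx. assert (H1 := vl_ge1 s P c x HH Hx). assert (H2 := EE_pos s x).
    apply Rmult_lt_0_compat; lra. }
  exists (c + 1), (vl s P c (c + 1) * EE s (c + 1)). split. lra. split. apply Hpos; lra.
  exists (fun y => vl s P c y * EE s y). split. reflexivity.
  intros x Hx. split. apply Hpos; lra.
  assert (Hd := der_mul (vl s P c) (EE s) x _ _ (vl_der s P c x HH ltac:(lra)) (EE_der s x ltac:(lra))).
  assert (H1 := vl_ge1 s P c x HH ltac:(lra)). assert (H2 := EE_pos s x).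
  assert (HPx := HP x ltac:(lra)).
  replace (ode_rhs s P x (vl s P c x * EE s x)) with
    ((fa s c x - hh s P c (vl s P c) x) * EE s x + vl s P c x * (/ s * EE s x / x)).
  exact Hd.
  unfold ode_rhs, fa, hh, fb. rewrite kk_id by lra. rewrite ff_eq by lra.
  field. repeat split; lra.
Qed.


Theorem theorem1 (s : R) (P : R -> R) :
  0 < s ->
  C2_on_nonneg P ->
  (forall x, 0 < x -> 0 < P x) ->
  ((exists x0 g0 : R, 0 < x0 /\ 0 < g0 /\
      exists gamma : R -> R, global_pos_solution s P x0 g0 gamma)
   <->
   (exists x0 : R, 0 < x0 /\
      ex_RInt_gen (fun z => P z / Rpower z (1 + 2 / s))
                  (at_point x0) (Rbar_locally p_infty))).
Proof.
  intros Hs HC HP. split.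
  - intros (x0 & g0 & Hx0 & Hg0 & gamma & Hsol). exists x0. split; auto.
    exact (dir1 s P Hs HC HP x0 g0 gamma Hx0 Hsol).
  - intros (x0 & Hx0 & Hgen). change (ex_RInt_gen (ff s P) (at_point x0) (Rbar_locally p_infty)) in Hgen.
    destruct (gen_lim _ _ Hgen) as [l Hl]. destruct (Hl (s / 4) ltac:(lra)) as [M HM].
    set (c := Rmax x0 M + 1).
    assert (Hc1 : x0 <= Rmax x0 M) by apply Rmax_l. assert (Hc2 : M <= Rmax x0 M) by apply Rmax_r.
    apply (dir2 s P c). refine (conj Hs (conj HC (conj HP (conj _ _)))). unfold c; lra.
    intros x Hx.
    assert (Hex : forall u v, x0 <= u -> x0 <= v -> ex_RInt (ff s P) u v).
    { intros u v Hu Hv. apply (ex_RInt_continuous (V:=R_CompleteNormedModule)). intros z Hz.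
      apply ff_cont; auto. assert (x0 <= Rmin u v) by (apply Rmin_glb; auto). lra. }
    assert (Hch := RInt_Chasles (V:=R_CompleteNormedModule) (ff s P) x0 c x
                   (Hex x0 c ltac:(unfold c in *; lra) ltac:(unfold c in *; lra)) (Hex c x ltac:(unfold c in *; lra) ltac:(unfold c in *; lra))).
    change (plus (RInt (ff s P) x0 c) (RInt (ff s P) c x)) with (RInt (ff s P) x0 c + RInt (ff s P) c x) in Hch.
    assert (A1 := HM x ltac:(unfold c in *; lra)). assert (A2 := HM c ltac:(unfold c in *; lra)).
    destruct (Rabs_def2 _ _ A1). destruct (Rabs_def2 _ _ A2). lra.
Qed.
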